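(* Let $\mathcal{X}=\{X\in\mathbb{R}^{n\times m}: X\ge0 \text{ entrywise},\ X^\top\mathbb{1}_n=\mathbb{1}_m\}$ (column-stochastic matrices) and consider the lift $\varphi\colon(\mathrm{S}^{n-1})^m\to\mathcal{X}$, $\varphi(y_1,\dots,y_m)=[y_1\odot y_1,\dots,y_m\odot y_m]$. It satisfies ''local $\Rightarrow$ local'' at every point, satisfies ''1 $\Rightarrow$ 1'' at $(y_1,\dots,y_m)$ if and only if $(y_i)_j\neq0$ for all $i,j$, and satisfies ''2 $\Rightarrow$ 1'' at every point.
   Context: $\mathbb{1}_n$ is the all-ones vector, $\odot$ the entrywise product, $[x_1,\dots,x_m]$ the $n\times m$ matrix with columns $x_i$, $\mathrm{S}^{n-1}$ the unit sphere. General setting: for a smooth manifold $\mathcal{M}$ and smooth $\varphi\colon\mathcal{M}\to\mathcal{E}$ with image $\mathcal{X}$, and a cost $f$, set $g=f\circ\varphi$. Tangent cone: $\mathrm{T}_x\mathcal{X}=\{\lim (x_i-x)/\tau_i: x_i\in\mathcal{X},\tau_i>0,\tau_i\to0\}$; $K^*=\{u:\langle u,v\rangle\ge0\ \forall v\in K\}$; $x$ is stationary for $f$ on $\mathcal{X}$ if $\nabla f(x)\in(\mathrm{T}_x\mathcal{X})^*$. $y$ is 1-critical for $g$ if $(g\circ c)'(0)=0$ for all smooth curves $c$ in $\mathcal{M}$ with $c(0)=y$; 2-critical if moreover $(g\circ c)''(0)\ge0$ for all such curves. ''local $\Rightarrow$ local'' at $y$: for every continuous $f\colon\mathcal{X}\to\mathbb{R}$,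 if $y$ is a local minimum of $g$ then $\varphi(y)$ is a local minimum of $f$ on $\mathcal{X}$. ''$k\Rightarrow1$'' at $y$ ($k=1,2$): for every $k$-times differentiable $f\colon\mathcal{E}\to\mathbb{R}$, if $y$ is $k$-critical for $g$ then $\varphi(y)$ is stationary for $f$ on $\mathcal{X}$. *)

(* Defs.v *)
From HB Require Import structures.
From mathcomp Require Import all_boot all_order all_algebra.
From mathcomp Require Import all_classical all_reals all_analysis.
Set Implicit Arguments. Unset Strict Implicit. Unset Printing Implicit Defensive.
Import Order.TTheory GRing.Theory Num.Theory.
Import numFieldNormedType.Exports.
Local Open Scope classical_set_scope.
Local Open Scope ring_scope.

Section Defs.
Variables (R : realType) (n m : nat).
Local Notation E := 'M[R]_(n, m).

Definition frob (A B : E) : R := \sum_(i < n) \sum_(j < m) A i j * B i j.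

Definition stoch : set E :=
  [set X : E | (forall i j, 0 <= X i j) /\ X^T *m (const_mx 1 : 'cV[R]_n) = const_mx 1].

(* the manifold (S^{n-1})^m, realized as matrices whose columns are unit vectors *)
Definition sphm : set E :=
  [set Y : E | forall j : 'I_m, \sum_(i < n) Y i j ^+ 2 = 1].

Definition lift (Y : E) : E := \matrix_(i, j) (Y i j * Y i j).

Definition tcone (A : set E) (x : E) : set E :=
  [set v : E | exists (xs : nat -> E) (ts : nat -> R),
     (forall k, A (xs k)) /\ (forall k, 0 < ts k) /\
     ts @ \oo --> (0 : R) /\
     (fun k => (ts k)^-1 *: (xs k - x)) @ \oo --> v].

Definition dualcone (K : set E) : set E :=
  [set u : E | forall v : E, K v -> 0 <= frob u v].

(* gradient of f at x w.r.t. the Frobenius inner product (Riesz representer of Df(x)) *)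
Definition grad (f : E -> R^o) (x : E) : E :=
  \matrix_(i, j) ('d f x (delta_mx i j : E)).

Definition stationary (f : E -> R^o) (A : set E) (x : E) : Prop :=
  dualcone (tcone A x) (grad f x).

Definition smooth1 (h : R -> R^o) : Prop :=
  forall (k : nat) (t : R), derivable (derive1n k h) t 1.

Definition smooth_curve (c : R -> E) : Prop :=
  (forall i j, smooth1 (fun t => c t i j)) /\ (forall t, sphm (c t)).

Definition diff1 (f : E -> R^o) : Prop := forall x, differentiable f x.
Definition diff2 (f : E -> R^o) : Prop :=
  diff1 f /\ forall (v : E) (x : E), differentiable (fun z : E => ('d f z v : R^o)) x.

Definition crit1 (g : E -> R^o) (y : E) : Prop :=
  forall c : R -> E, smooth_curve c -> c 0 = y -> derive1 (g \o c) 0 = 0.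
Definition crit2 (g : E -> R^o) (y : E) : Prop :=
  crit1 g y /\
  forall c : R -> E, smooth_curve c -> c 0 = y -> 0 <= derive1 (derive1 (g \o c)) 0.

Definition locmin_on (A : set E) (f : E -> R) (x : E) : Prop :=
  \forall z \near x, A z -> f x <= f z.

Definition local_local (y : E) : Prop :=
  forall f : E -> R, {within stoch, continuous f} ->
    locmin_on sphm (f \o lift) y -> locmin_on stoch f (lift y).
Definition one_one (y : E) : Prop :=
  forall f : E -> R^o, diff1 f -> crit1 (f \o lift) y -> stationary f stoch (lift y).
Definition two_one (y : E) : Prop :=
  forall f : E -> R^o, diff2 f -> crit2 (f \o lift) y -> stationary f stoch (lift y).

End Defs.

(* Main.v *)
Require Import Defs.
From HB Require Import structures.
From mathcomp Require Import all_boot all_order all_algebra.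
From mathcomp Require Import all_classical all_reals all_analysis.
From mathcomp Require Import ring lra.
Import Order.TTheory GRing.Theory Num.Theory.
Import numFieldNormedType.Exports.
Local Open Scope classical_set_scope.
Local Open Scope ring_scope.

Set Implicit Arguments. Unset Strict Implicit.
Section Aux.
Variables (R : realType) (n m : nat).
Local Notation E := 'M[R]_(n, m).

Lemma stochE (M : E) : stoch M <-> (forall i j, 0 <= M i j) /\ (forall j, \sum_i M i j = 1).
Proof.
split; case=> H1 H2; split => //.
  move=> j; have /matrixP/(_ j ord0) := H2; rewrite !mxE => <-.
  by apply: eq_bigr => i _; rewrite !mxE mulr1.
apply/matrixP => j k; rewrite !mxE -[RHS](H2 j).
by apply: eq_bigr => i _; rewrite !mxE mulr1.
Qed.

Lemma lift_stoch (y : E) : sphm y -> stoch (Defs.lift y).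
Proof.
move=> hy; apply/stochE; split=> [i j|j]; first by rewrite mxE -expr2 sqr_ge0.
rewrite -(hy j); apply: eq_bigr => i _; by rewrite !mxE expr2.
Qed.

Lemma sum_delta_col (a b : 'I_n) (j k : 'I_m) :
  \sum_(i < n) (((i == a) && (k == j))%:R - ((i == b) && (k == j))%:R) = 0 :> R.
Proof.
have H c : \sum_(i < n) ((i == c) && (k == j))%:R = (k == j)%:R :> R.
  rewrite (bigD1 c) //= big1 => [|i /negbTE hi]; rewrite ?hi //.
  by rewrite eqxx addr0.
by rewrite sumrB !H subrr.
Qed.

Lemma frob_grad (f : E -> R^o) x (V : E) : frob (grad f x) V = 'd f x V.
Proof.
rewrite {2}(matrix_sum_delta V) linear_sum; apply: eq_bigr => i _.
rewrite linear_sum; apply: eq_bigr => j _; by rewrite linearZ /= mxE mulrC.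
Qed.

Lemma tcone_nonneg (X V : E) : tcone (@stoch R n m) X V -> forall i j, X i j = 0 -> 0 <= V i j.
Proof.
move=> [xs [ts [Hx [Hpos [Hts Hcv]]]]] i j X0.
have Hc : (fun k => ((ts k)^-1 *: (xs k - X)) i j) @ \oo --> V i j.
  by apply: (continuous_cvg _ (@coord_continuous R n m i j V) Hcv).
apply: (closed_cvg (fun x : R => 0 <= x) (@closed_ge _ 0) _ _ Hc).
apply: nearW => k /=; rewrite !mxE X0 subr0.
have /stochE [h _] := Hx k.
by rewrite mulr_ge0 // invr_ge0 ltW.
Qed.

Lemma tcone_col (X V : E) : stoch X -> tcone (@stoch R n m) X V -> forall j, \sum_i V i j = 0.
Proof.
move=> /stochE [_ hX] [xs [ts [Hx [Hpos [Hts Hcv]]]]] j.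
have H1 : (fun k => \sum_a ((ts k)^-1 *: (xs k - X)) a j) @ \oo --> \sum_a V a j.
  apply: cvg_big; first exact: add_continuous.
  move=> a _; exact: (continuous_cvg _ (@coord_continuous R n m a j V) Hcv).
have H2 : (fun k => \sum_a ((ts k)^-1 *: (xs k - X)) a j) = fun _ => 0.
  apply: funext => k.
  have /stochE [_ hk] := Hx k.
  rewrite (eq_bigr (fun a => (ts k)^-1 * (xs k a j - X a j))); last by move=> a _; rewrite !mxE.
  by rewrite -mulr_sumr sumrB hk hX subrr mulr0.
rewrite H2 in H1.
exact: (cvg_unique _ H1 (cvg_cst 0)).
Qed.

Lemma supp_ex (y : E) : sphm y -> forall j, exists b, y b j != 0.
Proof.
move=> hy j; apply/existsP; apply: contraT; rewrite negb_exists => /forallP H.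
have := hy j; rewrite big1 => [|i _]; first by move/eqP; rewrite eq_sym oner_eq0.
by have := H i; rewrite negbK => /eqP ->; rewrite expr0n.
Qed.

Lemma stat_crit (y G : E) : sphm y ->
  (forall j a b, y a j != 0 -> y b j != 0 -> G a j = G b j) ->
  (forall j a b, y a j = 0 -> y b j != 0 -> G b j <= G a j) ->
  forall V, tcone (@stoch R n m) (Defs.lift y) V -> 0 <= frob G V.
Proof.
move=> hy H1 H2 V hV; rewrite /frob exchange_big /=; apply: sumr_ge0 => j _.
have [b hb] := supp_ex hy j.
have -> : \sum_i G i j * V i j = \sum_i (G i j - G b j) * V i j + G b j * \sum_i V i j.
  rewrite mulr_sumr -big_split /=; apply: eq_bigr => i _; ring.
rewrite (tcone_col (lift_stoch hy) hV) mulr0 addr0; apply: sumr_ge0 => i _.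
have [h0|h0] := eqVneq (y i j) 0.
  rewrite mulr_ge0 // ?subr_ge0 ?(H2 j i b h0 hb) //.
  by apply: (tcone_nonneg hV); rewrite mxE h0 mulr0.
by rewrite (H1 j i b h0 hb) subrr mul0r.
Qed.

End Aux.

Section Trig.
Variable R : realType.

Definition tf (a b c : R) (t : R) : R := a + b * cos t + c * sin t.

Lemma tf_derive a b c t : is_derive t (1:R) (tf a b c) (c * cos t - b * sin t).
Proof.
have -> : tf a b c = cst a + b *: (@cos R) + c *: (@sin R) by apply: funext => s.
apply: (is_derive_eq (is_deriveD (is_deriveD (is_derive_cst a t 1)
  (is_deriveZ b (is_derive_cos t))) (is_deriveZ c (is_derive_sin t)))).
by rewrite add0r addrC scalerN.
Qed.
Lemma tf_d1 a b c : derive1 (tf a b c) = tf 0 c (-b).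
Proof.
apply: funext => t; rewrite derive1E (@derive_val _ _ _ _ _ _ _ (tf_derive a b c t)).
rewrite /tf; ring.
Qed.

Lemma tf_smooth a b c k : exists a' b' c', derive1n k (tf a b c) = tf a' b' c'.
Proof.
elim: k => [|k [a' [b' [c' IH]]]]; first by exists a, b, c.
by exists 0, c', (-b'); rewrite derive1nS IH tf_d1.
Qed.

Lemma tf_derivable a b c t : derivable (tf a b c) t 1.
Proof. exact: (@ex_derive _ _ _ _ _ _ _ (tf_derive a b c t)). Qed.

End Trig.

Section Curve.
Variables (R : realType) (n m : nat).
Local Notation E := 'M[R]_(n, m).
Local Notation lift := (@Defs.lift R n m).

Lemma phi_derive (f : E -> R^o) (X D : E) (s : R) : differentiable f (s *: D + X) ->
  is_derive s (1:R) (fun t : R => f (t *: D + X)) ('d f (s *: D + X) D).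
Proof.
move=> df.
have E1 : (fun h : R => h^-1 *: (((fun t : R => f (t *: D + X)) \o shift s) (h *: (1:R)) - f (s *: D + X))) = (fun h : R => h^-1 *: ((f \o shift (s *: D + X)) (h *: D) - f (s *: D + X))).
  apply: funext => h /=; congr (_ *: (f _ - _)).
  rewrite scalerDl addrA; congr (_ *: _ + _ + _); exact: mulr1.
apply: DeriveDef; first by rewrite /derivable E1; exact: diff_derivable.
by rewrite /derive E1 -/(derive f _ D) deriveE.
Qed.

Definition rot (y : E) (j : 'I_m) (a b : 'I_n) (t : R) : E :=
  \matrix_(i, k) if k == j then (if i == a then tf 0 (y a j) (- y b j) t
     else if i == b then tf 0 (y b j) (y a j) t else y i k) else y i k.

Definition hh (y : E) (j : 'I_m) (a b : 'I_n) (t : R) : R :=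
  tf 0 (y a j) (- y b j) t ^+ 2 - y a j ^+ 2.

Definition Dm (j : 'I_m) (a b : 'I_n) : E := delta_mx a j - delta_mx b j.

Lemma lift_rot y j a b t : a != b ->
  lift (rot y j a b t) = hh y j a b t *: Dm j a b + lift y.
Proof.
move=> hab; apply/matrixP => i k; rewrite !mxE.
case: (eqVneq k j) => [->|hk]; rewrite ?eqxx ?andbT ?andbF /=; last first.
  by rewrite subrr mulr0 add0r.
case: (eqVneq i a) => [->|hia]; first by rewrite (negbTE hab) /hh /= mulr1n mulr0n; ring.
case: (eqVneq i b) => [->|hib] /=; last by rewrite subrr mulr0 add0r.
rewrite /hh /tf; apply/eqP; rewrite -subr_eq0; apply/eqP.
transitivity ((cos t ^+ 2 + sin t ^+ 2 - 1) * (y a j ^+ 2 + y b j ^+ 2)); first ring.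
by rewrite cos2Dsin2 subrr mul0r.
Qed.

Lemma rot0 y j a b : rot y j a b 0 = y.
Proof.
apply/matrixP => i k; rewrite !mxE /tf cos0 sin0.
case: (eqVneq k j) => [->|hk] //.
case: (eqVneq i a) => [->|hia]; first by ring.
by case: (eqVneq i b) => [->|hib] //; ring.
Qed.

Lemma rot_sphm y j a b t : a != b -> sphm y -> sphm (rot y j a b t).
Proof.
move=> hab hy k; rewrite -(hy k).
have H (Z : E) i : Z i k ^+ 2 = lift Z i k by rewrite mxE expr2.
under eq_bigr do rewrite H lift_rot // !mxE.
under [RHS]eq_bigr do rewrite H !mxE.
rewrite big_split /= -mulr_sumr.
by rewrite [X in _ * X](_ : _ = 0) ?mulr0 ?add0r //; exact: sum_delta_col.
Qed.

Lemma rot_entry y j a b i k : exists a' b' c',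
  (fun t => rot y j a b t i k) = tf a' b' c'.
Proof.
case: (eqVneq k j) => [->|hk]; last first.
  exists (y i k), 0, 0; apply: funext => t; rewrite !mxE (negbTE hk) /tf; ring.
case: (eqVneq i a) => [->|hia].
  by exists 0, (y a j), (- y b j); apply: funext => t; rewrite !mxE !eqxx.
case: (eqVneq i b) => [hib|hib].
  by exists 0, (y b j), (y a j); apply: funext => t; rewrite !mxE eqxx (negbTE hia) hib eqxx.
exists (y i j), 0, 0; apply: funext => t; rewrite !mxE eqxx (negbTE hia) (negbTE hib) /tf; ring.
Qed.

Lemma rot_smooth y j a b : a != b -> sphm y -> smooth_curve (rot y j a b).
Proof.
move=> hab hy; split; last by move=> t; exact: rot_sphm.
move=> i k kk t.
have [a' [b' [c' ->]]] := rot_entry y j a b i k.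
have [a2 [b2 [c2 ->]]] := tf_smooth a' b' c' kk.
exact: tf_derivable.
Qed.

Section HH.
Variables (y : E) (j : 'I_m) (a b : 'I_n).
Local Notation ya := (y a j).
Local Notation yb := (y b j).
Local Notation u := (tf 0 ya (- yb)).
Local Notation du := (tf 0 (- yb) (- ya)).
Local Notation ddu := (tf 0 (- ya) yb).

Lemma hh_derive t : is_derive t (1:R) (hh y j a b) (u t * du t + u t * du t).
Proof.
have -> : hh y j a b = u * u - cst (ya ^+ 2) by apply: funext => s; rewrite /hh expr2.
apply: (is_derive_eq (is_deriveB (is_deriveM (tf_derive _ _ _ t) (tf_derive _ _ _ t))
  (is_derive_cst _ t 1))).
rewrite /tf /= subr0 -[_ *: _]/(_ * _); ring.
Qed.

Lemma hh_d1 : derive1 (hh y j a b) = fun t => u t * du t + u t * du t.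
Proof. by apply: funext => t; rewrite derive1E (@derive_val _ _ _ _ _ _ _ (hh_derive t)). Qed.

Lemma hh0 : hh y j a b 0 = 0.
Proof. by rewrite /hh /tf cos0 sin0 mulr1 mulr0 addr0 add0r subrr. Qed.

Lemma hd_derive t : is_derive t (1:R) (fun s => u s * du s + u s * du s)
  (2 * (du t * du t + u t * ddu t)).
Proof.
have -> : (fun s => u s * du s + u s * du s) = u * du + u * du by [].
have H := is_deriveM (tf_derive 0 ya (- yb) t) (tf_derive 0 (- yb) (- ya) t).
apply: (is_derive_eq (is_deriveD H H)).
have sc (p q : R) : p *: q = p * q by [].
rewrite /tf /= [_ *: (_ - _)]sc [(0 + _ + _) *: _]sc; ring.
Qed.

End HH.

Lemma comp_rot (f : E -> R^o) y j a b : a != b ->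
  (f \o lift) \o rot y j a b = (fun s => f (s *: Dm j a b + lift y)) \o hh y j a b.
Proof. by move=> hab; apply: funext => t; rewrite /= lift_rot. Qed.

Lemma first_order (f : E -> R^o) y j a b : diff1 f -> crit1 (f \o lift) y ->
  sphm y -> a != b -> 'd f (lift y) (Dm j a b) * (y a j * y b j) = 0.
Proof.
move=> df hc hy hab.
have := hc _ (rot_smooth j hab hy) (rot0 y j a b).
rewrite comp_rot // derive1_comp; first last.
- exact: (@ex_derive _ _ _ _ _ _ _ (phi_derive (df _))).
- exact: (@ex_derive _ _ _ _ _ _ _ (hh_derive y j a b 0)).
rewrite hh_d1 derive1E (@derive_val _ _ _ _ _ _ _ (phi_derive (df _))) hh0 scale0r add0r.
rewrite /tf cos0 sin0 => H.
transitivity (- (1/2) * ('d f (lift y) (Dm j a b) *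
  ((0 + y a j * 1 + - y b j * 0) * (0 + - y b j * 1 + - y a j * 0) +
   (0 + y a j * 1 + - y b j * 0) * (0 + - y b j * 1 + - y a j * 0)))).
  field.
  by [].
by rewrite H mulr0.
Qed.

Lemma second_order (f : E -> R^o) y j a b : diff2 f -> crit2 (f \o lift) y ->
  sphm y -> y a j = 0 -> y b j != 0 -> 0 <= 'd f (lift y) (Dm j a b).
Proof.
move=> [df ddf] [_ hc] hy ha hb.
have hab : a != b by apply: contraNneq hb => <-; rewrite ha.
have := hc _ (rot_smooth j hab hy) (rot0 y j a b).
rewrite comp_rot //.
pose psi := fun s : R => 'd f (s *: Dm j a b + lift y) (Dm j a b) : R^o.
pose hd := fun s : R => tf 0 (y a j) (- y b j) s * tf 0 (- y b j) (- y a j) s +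
   tf 0 (y a j) (- y b j) s * tf 0 (- y b j) (- y a j) s.
have E1 : derive1 ((fun s => f (s *: Dm j a b + lift y)) \o hh y j a b) =
    (psi \o hh y j a b) * hd.
  apply: funext => t; rewrite derive1_comp; first last.
  - exact: (@ex_derive _ _ _ _ _ _ _ (phi_derive (df _))).
  - exact: (@ex_derive _ _ _ _ _ _ _ (hh_derive y j a b t)).
  by rewrite hh_d1 derive1E (@derive_val _ _ _ _ _ _ _ (phi_derive (df _))).
have dh : differentiable (hh y j a b) 0.
  exact/derivable1_diffP/(@ex_derive _ _ _ _ _ _ _ (hh_derive y j a b 0)).
have dpsi : differentiable psi (hh y j a b 0).
  apply/derivable1_diffP.
  exact: (@ex_derive _ _ _ _ _ _ _ (@phi_derive (fun z => 'd f z (Dm j a b)) (lift y) (Dm j a b) _ (ddf _ _))).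
have dF : derivable (psi \o hh y j a b) 0 1.
  exact/derivable1_diffP/differentiable_comp.
have dhd : derivable hd 0 1 by exact: (@ex_derive _ _ _ _ _ _ _ (hd_derive y j a b 0)).
rewrite E1 derive1E deriveM //.
rewrite (@derive_val _ _ _ _ _ _ _ (hd_derive y j a b 0)).
rewrite /= hh0 /psi scale0r add0r /hd /tf cos0 sin0 ha.
rewrite !(mulr0, mul0r, mulr1, oppr0, addr0, add0r, scale0r) mulrNN.
rewrite -[_ *: _]/(_ * _) pmulr_lge0 // mulr_gt0 // lt_def mulf_neq0 //= -expr2 sqr_ge0 //.
Qed.

End Curve.

Section Converse.
Variables (R : realType) (n m : nat).
Local Notation E := 'M[R]_(n, m).
Local Notation lift := (@Defs.lift R n m).
Local Notation Dm := (@Dm R n m).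

Lemma tcone_Dm (y : E) i j k : sphm y -> y k j != 0 -> i != k ->
  tcone (@stoch R n m) (lift y) (Dm j i k).
Proof.
move=> hy hk hik.
pose x0 := lift y k j.
have x0gt : 0 < x0 by rewrite /x0 mxE lt_def mulf_neq0 //= -expr2 sqr_ge0.
pose ts := fun t : nat => x0 * harmonic t.
have tsgt t : 0 < ts t by rewrite mulr_gt0 // harmonic_gt0.
have tsle t : ts t <= x0.
  rewrite /ts ler_piMr ?(ltW x0gt) // /harmonic /= invf_le1 ?ler1n //.
have /stochE [hX0 hX1] := lift_stoch hy.
exists (fun t => ts t *: Dm j i k + lift y), ts; split; [|split; [by []|split]].
- move=> t; apply/stochE; split.
    move=> a b; rewrite !mxE.
    case: (eqVneq a k) => [->|hak]; case: (eqVneq b j) => [->|hbj];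
      rewrite ?eqxx ?andbT ?andbF ?(negbTE hik) ?(negbTE hak) /= ?subr0 ?mulr0 ?add0r.
    + rewrite eq_sym (negbTE hik) /= sub0r mulrN1 addrC subr_ge0.
      by have := tsle t; rewrite /x0 mxE.
    + by rewrite -expr2 sqr_ge0.
    + apply: addr_ge0; last by rewrite -expr2 sqr_ge0.
      by apply: mulr_ge0; [exact: ltW|case: (a == i)].
    + by rewrite -expr2 sqr_ge0.
  move=> b; rewrite -(hX1 b).
  under eq_bigr do rewrite !mxE.
  rewrite big_split /= -mulr_sumr.
  rewrite [X in _ * X](_ : _ = 0) ?mulr0 ?add0r; last exact: sum_delta_col.
  by apply: eq_bigr => a _; rewrite mxE.
- rewrite -(mulr0 x0); apply: cvgMl_tmp; exact: cvg_harmonic.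
- have -> : (fun t => (ts t)^-1 *: (ts t *: Dm j i k + lift y - lift y)) = fun _ => Dm j i k.
    apply: funext => t; rewrite addrK scalerA mulVf ?scale1r //.
    exact: lt0r_neq0.
  exact: cvg_cst.
Qed.

Lemma not_one_one (y : E) i j : sphm y -> y i j = 0 -> ~ one_one y.
Proof.
move=> hy h0 H.
have [k hk] := supp_ex hy j.
have hik : i != k by apply: contraNneq hk => <-; rewrite h0.
have [L HL] : exists L : {linear E -> R^o}, forall N, L N = - N i j.
  have @L : {linear E -> R^o}.
    exists (fun N : E => - N i j : R^o); do 2![eexists]; do ?[constructor].
    - by rewrite mxE oppr0.
    - by move=> A B; rewrite !mxE opprD.
    - by move=> c A; rewrite !mxE /GRing.scale /= mulrN.
  by exists L.
have cL : continuous L.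
  have -> : (L : E -> R^o) = (fun N : E => - N i j : R^o) by apply: funext => N; rewrite HL.
  move=> x; apply: continuousN; exact: coord_continuous.
have dL : diff1 (L : E -> R^o) by move=> x; exact: linear_differentiable.
have hc : crit1 ((L : E -> R^o) \o lift) y.
  move=> c [hs _] c0.
  pose h := fun t => c t i j.
  have -> : ((L : E -> R^o) \o lift) \o c = - (h * h).
    by apply: funext => t; rewrite /= HL mxE.
  have dh : derivable h 0 1 by have := hs i j 0%N 0; rewrite derive1n0.
  rewrite derive1E deriveN; last exact: derivableM.
  by rewrite deriveM // /h c0 h0 scale0r addr0 oppr0.
have := H _ dL hc _ (tcone_Dm hy hk hik).
rewrite frob_grad diff_lin // HL /Dm !mxE !eqxx (negbTE hik) /=.
by rewrite subr0 oppr_ge0 ler10.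
Qed.

End Converse.

Section SQ.
Variable R : realType.

Lemma close_pos (b r e : R) : 0 <= b -> 0 <= r -> 0 < e ->
  `|b * b - r * r| < e * e -> `|b - r| < e.
Proof.
move=> hb hr he h.
have e1 : `|b * b - r * r| = `|b - r| * (b + r).
  by rewrite -(ger0_norm (addr_ge0 hb hr)) -normrM; congr `|_|; ring.
have e2 : `|b - r| <= b + r.
  by rewrite (le_trans (ler_normB _ _)) // !ger0_norm.
have e3 := normr_ge0 (b - r).
rewrite e1 in h.
nra.
Qed.

Lemma close_sqrt (a z e : R) : 0 <= z -> 0 < e -> `|a * a - z| < e * e ->
  `|a - (if 0 <= a then Num.sqrt z else - Num.sqrt z)| < e.
Proof.
move=> hz he h.
have hs : Num.sqrt z * Num.sqrt z = z by rewrite -expr2 sqr_sqrtr.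
case: ifPn => ha.
  by apply: close_pos => //; rewrite ?sqrtr_ge0 // hs.
rewrite opprK -normrN opprD.
have ha' : 0 <= - a by rewrite oppr_ge0 ltW // ltNge.
by apply: close_pos => //; rewrite ?sqrtr_ge0 // hs mulrNN.
Qed.
End SQ.

Section Local.
Variables (R : realType) (n m : nat).
Local Notation E := 'M[R]_(n, m).
Local Notation lift := (@Defs.lift R n m).

Lemma local_ok (y : E) : local_local y.
Proof.
move=> f _ /nbhs_ballP [e e0 He].
apply/nbhs_ballP; exists (e * e); first exact: mulr_gt0.
move=> Z hZ sZ.
have /stochE [Z0 Z1] := sZ.
pose W : E := \matrix_(i, k) (if 0 <= y i k then Num.sqrt (Z i k) else - Num.sqrt (Z i k)).
have lW : lift W = Z.
  apply/matrixP => i k; rewrite !mxE.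
  by case: ifP => _; rewrite ?mulrNN -expr2 sqr_sqrtr.
have sW : sphm W.
  move=> k; rewrite -(Z1 k); apply: eq_bigr => i _.
  by rewrite -lW [in RHS]mxE expr2.
have bW : ball y e W.
  split => // i k; rewrite -ball_normE /= mxE.
  apply: close_sqrt => //.
  have [_ /(_ i k)] := hZ.
  by rewrite -ball_normE /= mxE.
by have := He W bW sW; rewrite /= lW.
Qed.
End Local.

Section Main.
Variables (R : realType) (n m : nat).
Local Notation E := 'M[R]_(n, m).
Local Notation lift := (@Defs.lift R n m).

Lemma dDm (f : E -> R^o) x j a b :
  'd f x (@Dm R n m j a b) = grad f x a j - grad f x b j.
Proof. by rewrite /Dm linearB !mxE. Qed.

Lemma first_eq (f : E -> R^o) (y : E) : diff1 f -> crit1 (f \o lift) y -> sphm y ->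
  forall j a b, y a j != 0 -> y b j != 0 -> grad f (lift y) a j = grad f (lift y) b j.
Proof.
move=> df hc hy j a b ha hb.
have [->|hab] := eqVneq a b; first by [].
have := first_order j df hc hy hab; rewrite dDm => /eqP.
by rewrite !mulf_eq0 (negbTE ha) (negbTE hb) !orbF subr_eq0 => /eqP.
Qed.

End Main.

Theorem proposition2p6 (R : realType) (n m : nat) :
  (forall y : 'M[R]_(n, m), sphm y -> local_local y) /\
  (forall y : 'M[R]_(n, m), sphm y -> (one_one y <-> forall i j, y i j != 0)) /\
  (forall y : 'M[R]_(n, m), sphm y -> two_one y).
Proof.
split; first by move=> y _; exact: local_ok.
split.
  move=> y hy; split.
    by move=> H i j; apply/eqP => h0; exact: (not_one_one hy h0 H).
  move=> hnz f df hc; apply: stat_crit => //.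
    exact: first_eq.
  by move=> j a b ha; have := hnz a j; rewrite ha eqxx.
move=> y hy f [df ddf] [hc1 hc2]; apply: stat_crit => //.
  exact: first_eq.
move=> j a b ha hb.
have := second_order (conj df ddf) (conj hc1 hc2) hy ha hb.
by rewrite dDm subr_ge0.
Qed.
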